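(* Let $S,T$ be left semi-braces whose associated maps $r_S$ and $r_T$ are solutions. Let $\sigma:T\to\mathrm{Aut}(S)$ be a homomorphism from $(T,\cdot)$ into the automorphism group of $(S,+,\cdot)$ (${}^ua=\sigma(u)(a)$), $\delta:S\to\mathrm{End}(T,+)$ a map ($u^a=\delta(a)(u)$), and $\mathfrak b:S\times S\to T$ a $\delta$-cocycle satisfying $\mathfrak b(a\,{}^ub,\lambda_a({}^uc))+(uv)^{\lambda_a({}^uc)}+u(\mathfrak b({}^{u^{-1}}(a^{-1}),c)+(u^{-1})^c)=u(\mathfrak b(b,c)+v^c)$ for all $a,b,c\in S$, $u,v\in T$; let $B$ be the asymmetric product $S\times T$ with $(a,u)+(b,v)=(a+b,\mathfrak b(a,b)+u^b+v)$, $(a,u)(b,v)=(a\,{}^ub,uv)$. If for all $a,b\in S$ and $u\in T$: (1) $(u^1)^a=u^a$; (2) $\mathfrak b(1,a)+u=1+u$; (3) $\mathfrak b(a,1+b)=\mathfrak b(a,b)$, (where $1$ denotes the identity of $(S,\cdot)$ when it appears in $S$ and the identity of $(T,\cdot)$ when it appears in $T$), then the map $r_B$ associated to $B$ is a solution.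
   Context: A left semi-brace is a triple $(S,+,\cdot)$ such that $(S,+)$ is a semigroup, $(S,\cdot)$ is a group with identity $1$, and $a(b+c)=ab+a(a^{-1}+c)$ for all $a,b,c$. Set $\lambda_a(b)=a(a^{-1}+b)$, $\rho_b(a)=(a^{-1}+b)^{-1}b$; the map associated to $X$ is $r_X(x,y)=(\lambda_x(y),\rho_y(x))$. A solution is a map $r:X\times X\to X\times X$ with $(r\times\mathrm{id})(\mathrm{id}\times r)(r\times\mathrm{id})=(\mathrm{id}\times r)(r\times\mathrm{id})(\mathrm{id}\times r)$. An automorphism of $(S,+,\cdot)$ is a bijection preserving both operations. A $\delta$-cocycle is a map $\mathfrak b:S\times S\to T$ with $\mathfrak b(a+b,c)+\mathfrak b(a,b)^c+(u^b)^c+v^c=\mathfrak b(a,b+c)+u^{b+c}+\mathfrak b(b,c)+v^c$ for all $a,b,c\in S$, $u,v\in T$. *)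

(* Defs.v *)
Definition is_group {S : Type} (mul : S -> S -> S) (one : S) (inv : S -> S) : Prop :=
  (forall a b c, mul (mul a b) c = mul a (mul b c)) /\
  (forall a, mul one a = a) /\ (forall a, mul a one = a) /\
  (forall a, mul (inv a) a = one) /\ (forall a, mul a (inv a) = one).

Definition is_left_semibrace {S : Type} (add mul : S -> S -> S) (one : S)
  (inv : S -> S) : Prop :=
  (forall a b c, add (add a b) c = add a (add b c)) /\
  is_group mul one inv /\
  (forall a b c, mul a (add b c) = add (mul a b) (mul a (add (inv a) c))).

Definition sb_lambda {S : Type} (add mul : S -> S -> S) (inv : S -> S) (a b : S) : S :=
  mul a (add (inv a) b).

Definition sb_rho {S : Type} (add mul : S -> S -> S) (inv : S -> S) (b a : S) : S :=
  mul (inv (add (inv a) b)) b.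

Definition assoc_map {S : Type} (add mul : S -> S -> S) (inv : S -> S) (p : S * S) : S * S :=
  (sb_lambda add mul inv (fst p) (snd p), sb_rho add mul inv (snd p) (fst p)).

Definition r12 {X : Type} (r : X * X -> X * X) (t : X * X * X) : X * X * X :=
  match t with (x, y, z) => let (x', y') := r (x, y) in (x', y', z) end.

Definition r23 {X : Type} (r : X * X -> X * X) (t : X * X * X) : X * X * X :=
  match t with (x, y, z) => let (y', z') := r (y, z) in (x, y', z') end.

Definition is_solution {X : Type} (r : X * X -> X * X) : Prop :=
  forall t : X * X * X, r12 r (r23 r (r12 r t)) = r23 r (r12 r (r23 r t)).

Definition is_automorphism {S : Type} (add mul : S -> S -> S) (f : S -> S) : Prop :=
  (exists g : S -> S, (forall x, g (f x) = x) /\ (forall y, f (g y) = y)) /\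
  (forall a b, f (add a b) = add (f a) (f b)) /\
  (forall a b, f (mul a b) = mul (f a) (f b)).

(* delta-cocycle, with delta c u written u^c *)
Definition is_delta_cocycle {S T : Type} (addS : S -> S -> S) (addT : T -> T -> T)
  (delta : S -> T -> T) (bb : S -> S -> T) : Prop :=
  forall (a b c : S) (u v : T),
    addT (addT (addT (bb (addS a b) c) (delta c (bb a b))) (delta c (delta b u))) (delta c v)
    = addT (addT (addT (bb a (addS b c)) (delta (addS b c) u)) (bb b c)) (delta c v).

Definition ap_add {S T : Type} (addS : S -> S -> S) (addT : T -> T -> T)
  (delta : S -> T -> T) (bb : S -> S -> T) (x y : S * T) : S * T :=
  (addS (fst x) (fst y),
   addT (addT (bb (fst x) (fst y)) (delta (fst y) (snd x))) (snd y)).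

Definition ap_mul {S T : Type} (mulS : S -> S -> S) (mulT : T -> T -> T)
  (sigma : T -> S -> S) (x y : S * T) : S * T :=
  (mulS (fst x) (sigma (snd x) (fst y)), mulT (snd x) (snd y)).

Definition ap_inv {S T : Type} (invS : S -> S) (invT : T -> T)
  (sigma : T -> S -> S) (x : S * T) : S * T :=
  (sigma (invT (snd x)) (invS (fst x)), invT (snd x)).

(* Main.v *)
Require Import Defs.

Declare Scope sb_scope.
Delimit Scope sb_scope with sb.

Section SB.
Variables (X : Type) (add mul : X -> X -> X) (one : X) (inv : X -> X).
Hypothesis HX : is_left_semibrace add mul one inv.

Local Notation "a + b" := (add a b) : sb_scope.
Local Notation "a * b" := (mul a b) : sb_scope.
Local Open Scope sb_scope.
Local Notation lam := (sb_lambda add mul inv).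
Local Notation rho := (sb_rho add mul inv).

Lemma sb_assoc a b c : (a + b) + c = a + (b + c).
Proof. destruct HX as [H _]. apply H. Qed.
Lemma sb_massoc a b c : (a * b) * c = a * (b * c).
Proof. destruct HX as [_ [[H _] _]]. apply H. Qed.
Lemma sb_one_l a : one * a = a.
Proof. destruct HX as [_ [[_ [H _]] _]]. apply H. Qed.
Lemma sb_one_r a : a * one = a.
Proof. destruct HX as [_ [[_ [_ [H _]]] _]]. apply H. Qed.
Lemma sb_inv_l a : inv a * a = one.
Proof. destruct HX as [_ [[_ [_ [_ [H _]]]] _]]. apply H. Qed.
Lemma sb_inv_r a : a * inv a = one.
Proof. destruct HX as [_ [[_ [_ [_ [_ H]]]] _]]. apply H. Qed.
Lemma sb_dist a b c : a * (b + c) = a * b + a * (inv a + c).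
Proof. destruct HX as [_ [_ H]]. apply H. Qed.

Lemma sb_cancel_l a b c : a * b = a * c -> b = c.
Proof. intro H. rewrite <- (sb_one_l b), <- (sb_one_l c), <- (sb_inv_l a), !sb_massoc, H. reflexivity. Qed.
Lemma sb_cancel_r a b c : b * a = c * a -> b = c.
Proof. intro H. rewrite <- (sb_one_r b), <- (sb_one_r c), <- (sb_inv_r a), <- !sb_massoc, H. reflexivity. Qed.
Lemma sb_inv_one : inv one = one.
Proof. rewrite <- (sb_one_r (inv one)). apply sb_inv_l. Qed.
Lemma sb_inv_inv a : inv (inv a) = a.
Proof. apply (sb_cancel_l (inv a)). rewrite sb_inv_r, sb_inv_l. reflexivity. Qed.
Lemma sb_inv_mul a b : inv (a * b) = inv b * inv a.
Proof. apply (sb_cancel_l (a * b)). rewrite sb_inv_r, sb_massoc, <- (sb_massoc b), sb_inv_r, sb_one_l, sb_inv_r. reflexivity. Qed.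
Lemma sb_inv_uniq a b : a * b = one -> b = inv a.
Proof. intro H. apply (sb_cancel_l a). rewrite H, sb_inv_r. reflexivity. Qed.

Lemma sb_addI b c : b + c = b + (one + c).
Proof. pose proof (sb_dist one b c) as H. rewrite !sb_one_l, sb_inv_one in H. exact H. Qed.

Lemma lam_def a b : lam a b = a * (inv a + b).
Proof. reflexivity. Qed.
Lemma rho_def b a : rho b a = inv (inv a + b) * b.
Proof. reflexivity. Qed.

Lemma lam_add a b c : lam a (b + c) = lam a b + lam a c.
Proof. rewrite !lam_def, <- sb_assoc, sb_dist. reflexivity. Qed.
Lemma lam_mul a b c : lam (a * b) c = lam a (lam b c).
Proof.
  rewrite !lam_def, sb_inv_mul, sb_massoc, sb_dist, <- (sb_massoc b), sb_inv_r, sb_one_l.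
  reflexivity.
Qed.
Lemma lam_one c : lam one c = one + c.
Proof. rewrite lam_def, sb_inv_one, sb_one_l. reflexivity. Qed.
Lemma add_lam a c : a + c = a * lam (inv a) c.
Proof. rewrite lam_def, sb_inv_inv, <- sb_massoc, sb_inv_r, sb_one_l. reflexivity. Qed.
Lemma eps_lam a c : one + lam a c = lam a c.
Proof. rewrite <- lam_one, <- lam_mul, sb_one_l. reflexivity. Qed.
Lemma lam_eps a c : lam a (one + c) = lam a c.
Proof. rewrite <- lam_one, <- lam_mul, sb_one_r. reflexivity. Qed.
Lemma eps_idem c : one + (one + c) = one + c.
Proof. pose proof (eps_lam one c) as H. rewrite lam_one in H. exact H. Qed.
Lemma mul_one_add a z : a * (one + z) = a + lam a z.
Proof. rewrite sb_dist, sb_one_r. reflexivity. Qed.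
Lemma rho_eq b a : rho b a = inv (lam a b) * (a * b).
Proof.
  rewrite rho_def, lam_def, sb_inv_mul, sb_massoc, <- (sb_massoc (inv a)), sb_inv_l, sb_one_l.
  reflexivity.
Qed.
Lemma lam_rho a b : lam a b * rho b a = a * b.
Proof. rewrite rho_eq, <- sb_massoc, sb_inv_r, sb_one_l. reflexivity. Qed.
Lemma lam_lam_rho a b c : lam a b * lam (rho b a) c = lam a (b * (one + c)).
Proof.
  rewrite (rho_eq b a), (lam_mul (inv (lam a b))), <- (add_lam (lam a b)), (lam_mul a b c), mul_one_add, lam_add.
  reflexivity.
Qed.
Lemma rho_rho a b c : rho c (rho b a) = inv (lam a (b * (one + c))) * (a * b * c).
Proof.
  rewrite (rho_eq c (rho b a)), <- lam_lam_rho, sb_inv_mul, sb_massoc. f_equal.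
  rewrite (rho_eq b a), !sb_massoc. reflexivity.
Qed.


Lemma sb_inv_inj a b : inv a = inv b -> a = b.
Proof. intro H. rewrite <- (sb_inv_inv a), <- (sb_inv_inv b), H. reflexivity. Qed.

Lemma braid_of_N (HN : forall x z, one + x * (one + z) = one + x * z) :
  is_solution (assoc_map add mul inv).
Proof.
  intros [[x y] z]. cbv beta iota zeta delta [r12 r23 assoc_map fst snd].
  set (p := lam y z). set (q := rho z y).
  assert (Hpq : p * q = y * z) by apply lam_rho.
  assert (E1 : lam (lam x y) (lam (rho y x) z) = lam x p).
  { rewrite <- lam_mul, lam_rho, lam_mul. reflexivity. }
  assert (E3 : rho z (rho y x) = rho q (rho p x)).
  { rewrite !rho_rho. f_equal.
    - f_equal. rewrite <- (lam_eps x (y * _)), <- (lam_eps x (p * _)), !HN, Hpq. reflexivity.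
    - rewrite !sb_massoc, Hpq. reflexivity. }
  assert (L : lam x p * rho (lam (rho y x) z) (lam x y) * rho z (rho y x) = x * (y * z)).
  { rewrite <- E1, lam_rho, sb_massoc, lam_rho, <- sb_massoc, lam_rho, !sb_massoc. reflexivity. }
  assert (R : lam x p * lam (rho p x) q * rho q (rho p x) = x * (y * z)).
  { rewrite sb_massoc, lam_rho, <- sb_massoc, lam_rho, sb_massoc, Hpq. reflexivity. }
  assert (E2 : rho (lam (rho y x) z) (lam x y) = lam (rho p x) q).
  { apply (sb_cancel_l (lam x p)). apply (sb_cancel_r (rho z (rho y x))).
    rewrite L, E3, R. reflexivity. }
  rewrite E1, E2, E3. reflexivity.
Qed.

Lemma sol_of_braid (Hs : is_solution (assoc_map add mul inv)) y z :
  one + y * (one + z) = one + lam y z * (one + rho z y).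
Proof.
  specialize (Hs (one, y, z)). cbv beta iota zeta delta [r12 r23 assoc_map fst snd] in Hs.
  apply (f_equal snd) in Hs. cbn [snd] in Hs.
  rewrite !rho_rho, !sb_one_l, lam_rho in Hs.
  apply sb_cancel_r in Hs. apply sb_inv_inj in Hs. rewrite !lam_one in Hs. exact Hs.
Qed.

Lemma EE e w : one + e = e -> one + w = w -> one + e * w = e * w.
Proof.
  intros He Hw.
  assert (H : e * w = e + lam e w) by (rewrite <- mul_one_add, Hw; reflexivity).
  rewrite H, <- sb_assoc, He. reflexivity.
Qed.

Section SOL.
Hypothesis Hsol : forall y z, one + y * (one + z) = one + lam y z * (one + rho z y).

Lemma eps_one : one + one = one.
Proof.
  pose proof (Hsol one one) as H.
  rewrite sb_one_l, eps_idem, lam_one, rho_def, sb_inv_one, sb_one_r in H.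
  rewrite EE in H by apply eps_idem.
  assert (H2 : one + inv (one + one) = one).
  { apply (sb_cancel_l (one + one)). rewrite <- H, sb_one_r. reflexivity. }
  assert (H3 : one + (one + inv (one + one)) = one + one) by (rewrite H2; reflexivity).
  rewrite eps_idem, H2 in H3. symmetry. exact H3.
Qed.

Lemma P1 z : one + inv (one + z) * z = one.
Proof.
  pose proof (Hsol one z) as H.
  rewrite sb_one_l, eps_idem, lam_one, rho_def, sb_inv_one in H.
  rewrite EE in H by apply eps_idem.
  apply (sb_cancel_l (one + z)). rewrite <- H, sb_one_r. reflexivity.
Qed.

Lemma ker_lam1 b : one + b = one -> lam b one = one.
Proof.
  intro Hb.
  assert (H1 : b + lam b one = b).
  { rewrite add_lam, <- lam_mul, sb_inv_l, lam_one, eps_one, sb_one_r. reflexivity. }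
  assert (H2 : one + (b + lam b one) = lam b one).
  { rewrite <- sb_assoc, Hb. apply eps_lam. }
  rewrite H1, Hb in H2. symmetry. exact H2.
Qed.

Lemma E_inv e : one + e = e -> one + inv e = inv e.
Proof.
  intro He.
  set (f := one + inv e).
  set (b := inv f * inv e).
  assert (Hb : one + b = one) by apply P1.
  assert (Hf : one + f = f) by apply eps_idem.
  assert (Hib : inv b = e * f) by (unfold b; rewrite sb_inv_mul, !sb_inv_inv; reflexivity).
  assert (HibE : one + inv b = inv b) by (rewrite Hib; apply EE; assumption).
  assert (Hc : lam b (inv b) = one).
  { assert (H1 : b + lam b (inv b) = one).
    { rewrite add_lam, <- lam_mul, sb_inv_l, lam_one, HibE, sb_inv_r. reflexivity. }
    assert (H2 : one + (b + lam b (inv b)) = lam b (inv b)).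
    { rewrite <- sb_assoc, Hb. apply eps_lam. }
    rewrite H1, eps_one in H2. symmetry. exact H2. }
  assert (H3 : lam (inv b) one = one).
  { transitivity (lam (inv b) (lam b one)); [rewrite (ker_lam1 b Hb); reflexivity|].
    rewrite <- lam_mul, sb_inv_l, lam_one, eps_one. reflexivity. }
  assert (H4 : lam (inv b) (lam b (inv b)) = inv b).
  { rewrite <- lam_mul, sb_inv_l, lam_one. exact HibE. }
  rewrite Hc, H3 in H4.
  assert (H5 : b = one) by (apply sb_inv_inj; rewrite sb_inv_one; symmetry; exact H4).
  unfold b in H5. apply sb_inv_uniq in H5. rewrite sb_inv_inv in H5.
  rewrite H5. reflexivity.
Qed.

Lemma ker_mul b b' : one + b = one -> one + b' = one -> one + b * b' = one.
Proof.
  intros Hb Hb'.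
  pose proof (Hsol b b') as H.
  assert (Hl : lam b b' = one) by (rewrite <- lam_eps, Hb'; apply ker_lam1; exact Hb).
  rewrite rho_eq, Hl, Hb', sb_one_r, Hb, sb_inv_one, !sb_one_l, eps_idem in H.
  symmetry. exact H.
Qed.

Lemma ker_inv b : one + b = one -> one + inv b = one.
Proof.
  intro Hb.
  pose proof (Hsol b (inv b)) as H.
  rewrite mul_one_add, <- sb_assoc, Hb, eps_lam, rho_eq, sb_inv_r, sb_one_r in H.
  set (p := lam b (inv b)) in H.
  assert (Hp : one + p = p) by apply eps_lam.
  rewrite (E_inv p Hp), sb_inv_r, eps_one in H.
  assert (Hl : lam (inv b) one = one).
  { transitivity (lam (inv b) (lam b one)); [rewrite (ker_lam1 b Hb); reflexivity|].
    rewrite <- lam_mul, sb_inv_l, lam_one, eps_one. reflexivity. }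
  transitivity (lam one (inv b)); [symmetry; apply lam_one|].
  transitivity (lam (inv b * b) (inv b)); [rewrite sb_inv_l; reflexivity|].
  rewrite lam_mul. fold p. rewrite H. exact Hl.
Qed.

Lemma kernel_lemma e b : one + e = e -> one + b = one -> one + e * b = e.
Proof.
  intros He Hb.
  set (f := one + e * b).
  set (b' := inv f * (e * b)).
  assert (Hb' : one + b' = one) by apply P1.
  assert (Hf : one + f = f) by apply eps_idem.
  assert (Hg : inv e * f = b * inv b').
  { unfold b'. rewrite sb_inv_mul, sb_inv_inv, sb_inv_mul, <- !sb_massoc, sb_inv_r, sb_one_l.
    reflexivity. }
  assert (HgE : one + inv e * f = inv e * f) by (apply EE; [apply E_inv; exact He | exact Hf]).
  assert (HgK : one + inv e * f = one) by (rewrite Hg; apply ker_mul; [exact Hb | apply ker_inv; exact Hb']).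
  rewrite HgK in HgE. symmetry in HgE. apply sb_inv_uniq in HgE. rewrite sb_inv_inv in HgE.
  exact HgE.
Qed.

Lemma N_of_sol x z : one + x * (one + z) = one + x * z.
Proof.
  set (e := one + z).
  set (b := inv e * z).
  assert (Hb : one + b = one) by apply P1.
  assert (Hz : z = e * b) by (unfold b; rewrite <- sb_massoc, sb_inv_r, sb_one_l; reflexivity).
  set (y := x * e).
  set (f := one + y).
  set (c := inv f * y).
  assert (Hc : one + c = one) by apply P1.
  assert (Hy : y = f * c) by (unfold c; rewrite <- sb_massoc, sb_inv_r, sb_one_l; reflexivity).
  assert (Hxz : x * z = f * (c * b)) by (rewrite Hz, <- sb_massoc; fold y; rewrite Hy, sb_massoc; reflexivity).
  rewrite Hxz, kernel_lemma; [reflexivity | apply eps_idem | apply ker_mul; assumption].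
Qed.

Lemma idem_absorb t : t + t = t -> forall x, (one + t) + x = one + x.
Proof.
  intros Ht x.
  set (K := one + t).
  assert (HKK : K + K = K).
  { unfold K. rewrite sb_assoc, <- sb_addI, Ht. reflexivity. }
  assert (HK : one + K = K) by apply eps_idem.
  set (e := one + x).
  assert (He : one + e = e) by apply eps_idem.
  set (K' := inv K * e).
  assert (HK' : one + K' = K') by (apply EE; [apply E_inv; exact HK | exact He]).
  assert (Hy : K + lam K K' = e).
  { rewrite add_lam, <- lam_mul, sb_inv_l, lam_one, HK'. unfold K'.
    rewrite <- sb_massoc, sb_inv_r, sb_one_l. reflexivity. }
  rewrite (sb_addI K x). fold e.
  transitivity (K + (K + lam K K')); [rewrite Hy; reflexivity|].
  rewrite <- sb_assoc, HKK. exact Hy.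
Qed.

End SOL.

End SB.


Theorem theorem55 (S T : Type)
  (addS mulS : S -> S -> S) (oneS : S) (invS : S -> S)
  (addT mulT : T -> T -> T) (oneT : T) (invT : T -> T)
  (HS : is_left_semibrace addS mulS oneS invS)
  (HT : is_left_semibrace addT mulT oneT invT)
  (HrS : is_solution (assoc_map addS mulS invS))
  (HrT : is_solution (assoc_map addT mulT invT))
  (sigma : T -> S -> S)
  (Hsig_aut : forall u, is_automorphism addS mulS (sigma u))
  (Hsig_hom : forall u v a, sigma (mulT u v) a = sigma u (sigma v a))
  (delta : S -> T -> T)
  (Hdelta_end : forall a u v, delta a (addT u v) = addT (delta a u) (delta a v))
  (bb : S -> S -> T)
  (Hcoc : is_delta_cocycle addS addT delta bb)
  (Hcompat : forall (a b c : S) (u v : T),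
     let l := sb_lambda addS mulS invS a (sigma u c) in
     addT (addT (bb (mulS a (sigma u b)) l) (delta l (mulT u v)))
          (mulT u (addT (bb (sigma (invT u) (invS a)) c) (delta c (invT u))))
     = mulT u (addT (bb b c) (delta c v)))
  (H1 : forall (a : S) (u : T), delta a (delta oneS u) = delta a u)
  (H2 : forall (a : S) (u : T), addT (bb oneS a) u = addT oneT u)
  (H3 : forall a b : S, bb a (addS oneS b) = bb a b) :
  is_solution
    (assoc_map (ap_add addS addT delta bb) (ap_mul mulS mulT sigma)
               (ap_inv invS invT sigma)).
Proof.
  assert (aS := sb_assoc _ _ _ _ _ HS). assert (aT := sb_assoc _ _ _ _ _ HT).
  assert (mS := sb_massoc _ _ _ _ _ HS). assert (mT := sb_massoc _ _ _ _ _ HT).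
  assert (olS := sb_one_l _ _ _ _ _ HS). assert (olT := sb_one_l _ _ _ _ _ HT).
  assert (orS := sb_one_r _ _ _ _ _ HS). assert (orT := sb_one_r _ _ _ _ _ HT).
  assert (ilS := sb_inv_l _ _ _ _ _ HS). assert (ilT := sb_inv_l _ _ _ _ _ HT).
  assert (irS := sb_inv_r _ _ _ _ _ HS). assert (irT := sb_inv_r _ _ _ _ _ HT).
  assert (dS := sb_dist _ _ _ _ _ HS). assert (dT := sb_dist _ _ _ _ _ HT).
  assert (solS := sol_of_braid _ _ _ _ _ HS HrS).
  assert (solT := sol_of_braid _ _ _ _ _ HT HrT).
  assert (NS := N_of_sol _ _ _ _ _ HS solS).
  assert (NT := N_of_sol _ _ _ _ _ HT solT).
  assert (e1T := eps_one _ _ _ _ _ HT solT).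
  assert (absT := idem_absorb _ _ _ _ _ HT solT).
  assert (sig_add : forall u a b, sigma u (addS a b) = addS (sigma u a) (sigma u b))
    by (intro u; apply (Hsig_aut u)).
  assert (sig_mul : forall u a b, sigma u (mulS a b) = mulS (sigma u a) (sigma u b))
    by (intro u; apply (Hsig_aut u)).
  assert (sig_one : forall u, sigma u oneS = oneS).
  { intro u. apply (sb_cancel_l _ _ _ _ _ HS (sigma u oneS)).
    rewrite <- sig_mul, !orS. reflexivity. }
  assert (sig_id : forall a, sigma oneT a = a).
  { intro a. destruct (Hsig_aut oneT) as [[g [Hg _]] _].
    rewrite <- (Hg (sigma oneT a)). rewrite <- Hsig_hom, olT. apply Hg. }
  assert (sig_inv : forall u a, sigma u (sigma (invT u) a) = a).
  { intros u a. rewrite <- Hsig_hom, irT. apply sig_id. }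
  assert (sig_invS : forall u a, sigma u (invS a) = invS (sigma u a)).
  { intros u a. apply (sb_inv_uniq _ _ _ _ _ HS). rewrite <- sig_mul, irS. apply sig_one. }
  assert (HB : is_left_semibrace (ap_add addS addT delta bb) (ap_mul mulS mulT sigma)
                 (oneS, oneT) (ap_inv invS invT sigma)).
  { split; [|split].
    - intros [a u] [b v] [c w]. unfold ap_add; cbn [fst snd]. f_equal; [apply aS|].
      pose proof (Hcoc a b c u v) as Hc.
      assert (Hc' := f_equal (fun t => addT t w) Hc). cbn beta in Hc'.
      rewrite !Hdelta_end. rewrite !aT in Hc'. rewrite !aT. exact Hc'.
    - split; [|split; [|split; [|split]]].
      + intros [a u] [b v] [c w]. unfold ap_mul; cbn [fst snd].
        rewrite mS, mT, sig_mul, Hsig_hom. reflexivity.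
      + intros [a u]. unfold ap_mul; cbn [fst snd]. rewrite sig_id, olS, olT. reflexivity.
      + intros [a u]. unfold ap_mul; cbn [fst snd]. rewrite sig_one, orS, orT. reflexivity.
      + intros [a u]. unfold ap_mul, ap_inv; cbn [fst snd].
        rewrite <- sig_mul, ilS, sig_one, ilT. reflexivity.
      + intros [a u]. unfold ap_mul, ap_inv; cbn [fst snd].
        rewrite sig_inv, irS, irT. reflexivity.
    - intros [a u] [b v] [c w]. unfold ap_mul, ap_add, ap_inv; cbn [fst snd].
      assert (Hl : mulS a (sigma u (addS (sigma (invT u) (invS a)) c))
                   = sb_lambda addS mulS invS a (sigma u c)).
      { rewrite sig_add, sig_inv. reflexivity. }
      rewrite Hl. f_equal.
      + rewrite sig_add, dS. reflexivity.
      + pose proof (Hcompat a b c u v) as Hc. cbv zeta in Hc.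
        rewrite (dT u (addT (bb b c) (delta c v)) w), <- Hc.
        rewrite (dT u (addT (bb (sigma (invT u) (invS a)) c) (delta c (invT u))) w).
        rewrite !aT. reflexivity. }
  apply (braid_of_N _ _ _ _ _ HB).
  intros [a u] [c w]. unfold ap_mul, ap_add; cbn [fst snd].
  rewrite !H2. f_equal.
  - rewrite sig_add, sig_one. apply NS.
  - assert (Ht : forall s, addT (delta s oneT) (delta s oneT) = delta s oneT)
      by (intro s; rewrite <- Hdelta_end, e1T; reflexivity).
    rewrite !absT by apply Ht.
    rewrite <- (NT u w). reflexivity.
Qed.
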